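(* A strongly regular graph with parameters $(76,30,8,14)$ does not contain a $16$-coclique (a set of $16$ pairwise non-adjacent vertices) as an induced subgraph.
   Context: A graph is strongly regular with parameters $(v,k,\lambda,\mu)$ if it has $v$ vertices, is $k$-regular, adjacent vertices have exactly $\lambda$ common neighbours and distinct non-adjacent vertices have exactly $\mu$ common neighbours. *)

(* Defs.v *)
From mathcomp Require Import all_boot.
Set Implicit Arguments. Unset Strict Implicit. Unset Printing Implicit Defensive.

Definition simple_graph (T : finType) (e : rel T) : Prop :=
  (forall x y, e x y = e y x) /\ (forall x, ~~ e x x).

Definition srg (T : finType) (e : rel T) (v k lam mu : nat) : Prop :=
  [/\ simple_graph e,
      #|T| = v,
      (forall x, #|[set y | e x y]| = k),
      (forall x y, e x y -> #|[set z | e x z && e y z]| = lam) &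
      (forall x y, x != y -> ~~ e x y -> #|[set z | e x z && e y z]| = mu)].

Definition coclique (T : finType) (e : rel T) (S : {set T}) : Prop :=
  forall x y, x \in S -> y \in S -> ~~ e x y.

(* Main.v *)
Require Import Defs.
From mathcomp Require Import all_boot all_order all_algebra.
From mathcomp Require Import ring zify.
Import GRing.Theory Num.Theory.
Set Implicit Arguments. Unset Strict Implicit. Unset Printing Implicit Defensive.

Local Open Scope ring_scope.
Definition ib (b : bool) : int := if b then 1 else 0.

Lemma ibM b c : ib b * ib c = ib (b && c).
Proof. by case: b; case: c; rewrite /ib ?mulr1 ?mulr0 ?mul0r. Qed.
Lemma ibK b : ib b * ib b = ib b.
Proof. by rewrite ibM andbb. Qed.
Lemma ib_ge0 b : (0 <= ib b)%R.
Proof. by case: b. Qed.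
Lemma ib_le1 b : (ib b <= 1)%R.
Proof. by case: b. Qed.
Lemma ibN b : ib (~~ b) = 1 - ib b.
Proof. by case: b; rewrite /ib /= ?subrr ?subr0. Qed.

Lemma sum_sym_even (T : finType) (f : T -> T -> int) :
  (forall x z, f x z = f z x) -> (forall x, f x x = 0) ->
  exists M, \sum_x \sum_z f x z = 2 * M.
Proof.
move=> fsym fdiag.
pose r (x z : T) := ib (enum_rank x < enum_rank z)%N.
exists (\sum_x \sum_z r x z * f x z).
have pt x z : f x z = r x z * f x z + r z x * f x z.
  rewrite /r; case: (ltngtP (enum_rank x) (enum_rank z)) => h /=; rewrite /ib /=.
  - by rewrite mul1r mul0r addr0.
  - by rewrite mul1r mul0r add0r.
  - by rewrite (enum_rank_inj (val_inj h)) fdiag mul0r addr0.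
transitivity (\sum_x \sum_z r x z * f x z + \sum_x \sum_z r z x * f x z).
  rewrite -big_split /=; apply: eq_bigr => x _; rewrite -big_split /=; apply: eq_bigr => z _; exact: pt.
rewrite [X in _ + X]exchange_big /=.
have -> : \sum_z \sum_x r z x * f x z = \sum_x \sum_z r x z * f x z.
  by apply: eq_bigr => x _; apply: eq_bigr => z _; rewrite fsym.
by rewrite mulr2n mulrDl mul1r.
Qed.

Section Main.
Local Open Scope ring_scope.
Variables (T : finType) (e : rel T) (S : {set T}).
Hypothesis esym : forall x y, e x y = e y x.
Hypothesis eirr : forall x, ~~ e x x.
Hypothesis cardT : #|T| = 76%N.
Hypothesis deg : forall x, #|[set y | e x y]| = 30%N.
Hypothesis lam : forall x y, e x y -> #|[set z | e x z && e y z]| = 8%N.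
Hypothesis mu : forall x y, x != y -> ~~ e x y -> #|[set z | e x z && e y z]| = 14%N.
Hypothesis cardS : #|S| = 16%N.
Hypothesis cocl : coclique e S.

Lemma card_sum (P : pred T) : (#|[set z | P z]|%:R : int) = \sum_z ib (P z).
Proof.
rewrite -sum1_card natr_sum big_mkcond /=; apply: eq_bigr => i _.
by rewrite inE /ib; case: (P i).
Qed.

Definition E x y := ib (e x y).
Definition sS y := ib (y \in S).
Definition oS y := 1 - sS y.
Definition dl (x y : T) := ib (x == y).

Lemma Esym x y : E x y = E y x. Proof. by rewrite /E esym. Qed.
Lemma Exx x : E x x = 0. Proof. by rewrite /E (negbTE (eirr x)). Qed.
Lemma EE x y : E x y * E x y = E x y. Proof. exact: ibK. Qed.

Lemma sum_deg x : \sum_z E x z = 30.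
Proof. by rewrite /E -card_sum deg. Qed.

Lemma sum_com x y : \sum_z E x z * E y z = 16 * dl x y - 6 * E x y + 14.
Proof.
have -> : \sum_z E x z * E y z = \sum_z ib (e x z && e y z).
  by apply: eq_bigr => z _; rewrite /E ibM.
rewrite -card_sum /dl /E.
case: (eqVneq x y) => [<-|nxy].
  rewrite (negbTE (eirr x)).
  have -> : [set z | e x z && e x z] = [set z | e x z] by apply/setP => z; rewrite !inE andbb.
  by rewrite deg.
case exy: (e x y); first by rewrite lam.
by rewrite mu // exy.
Qed.

Lemma sum_one : \sum_(z : T) (1 : int) = 76.
Proof. by rewrite sumr_const cardT. Qed.


Lemma sum_S : \sum_y sS y = 16.
Proof. by rewrite /sS -card_sum; congr (_%:R); rewrite -[RHS]cardS; apply: eq_card => y; rewrite inE. Qed.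

Lemma sum_O : \sum_y oS y = 60.
Proof. by rewrite /oS sumrB sum_one sum_S. Qed.

Lemma sum_dl x (f : T -> int) : \sum_z dl x z * f z = f x.
Proof.
rewrite (bigD1 x) //= /dl eqxx mul1r big1 ?addr0 // => z /negbTE.
by rewrite eq_sym => ->; rewrite mul0r.
Qed.
Lemma sum_dl' x (f : T -> int) : \sum_z dl z x * f z = f x.
Proof. rewrite -(sum_dl x f); apply: eq_bigr => z _; by rewrite /dl eq_sym. Qed.

Lemma cocE y z : sS y * sS z * E y z = 0.
Proof.
rewrite /sS /E; case yS: (y \in S); case zS: (z \in S); rewrite /ib ?mul0r ?mulr0 //.
by rewrite (negbTE (cocl yS zS)).
Qed.

Definition n x := \sum_y sS y * E x y.

Lemma nS x : sS x * n x = 0.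
Proof. rewrite /n mulr_sumr big1 // => y _; by rewrite mulrA cocE. Qed.

Lemma sum_oE y : \sum_x oS x * E y x = 30 - n y.
Proof.
rewrite /n -(sum_deg y) -sumrB; apply: eq_bigr => x _; rewrite /oS; ring.
Qed.

Lemma sum_on : \sum_x oS x * n x = 480.
Proof.
rewrite /n.
transitivity (\sum_y sS y * \sum_x oS x * E y x).
  rewrite (eq_bigr (fun x => \sum_y oS x * (sS y * E x y))); last by move=> x _; rewrite mulr_sumr.
  rewrite exchange_big /=; apply: eq_bigr => y _; rewrite mulr_sumr; apply: eq_bigr => x _.
  rewrite Esym; ring.
rewrite (eq_bigr (fun y => 30 * sS y - sS y * n y)); last first.
  by move=> y _; rewrite sum_oE; ring.
rewrite sumrB -mulr_sumr sum_S big1 ?subr0 //; by move=> y _; rewrite nS.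
Qed.

Lemma sum_SS_com : \sum_y \sum_y' sS y * sS y' * (\sum_x oS x * E y x * E y' x) = 3840.
Proof.
transitivity (\sum_y \sum_y' sS y * sS y' * (16 * dl y y' - 6 * E y y' + 14)).
  apply: eq_bigr => y _; apply: eq_bigr => y' _.
  rewrite -sum_com.
  have -> : \sum_x oS x * E y x * E y' x = \sum_z E y z * E y' z - \sum_x sS x * E y x * E y' x.
    by rewrite -sumrB; apply: eq_bigr => x _; rewrite /oS; ring.
  rewrite mulrBr.
  rewrite [X in _ - X](_ : _ = 0) ?subr0 //.
  rewrite mulr_sumr big1 // => x _.
  have -> : sS y * sS y' * (sS x * E y x * E y' x) = (sS y * sS x * E y x) * (sS y' * E y' x) by ring.
  by rewrite cocE mul0r.
transitivity (\sum_y (16 * sS y + 14 * 16 * sS y)).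
  apply: eq_bigr => y _.
  rewrite (eq_bigr (fun y' => 16 * (dl y y' * (sS y * sS y')) - 6 * (sS y * sS y' * E y y') + 14 * sS y * sS y')); last by move=> y' _; ring.
  rewrite !big_split /= -!mulr_sumr sum_dl /sS ibK.
  rewrite big1; last by move=> y' _; rewrite cocE.
  rewrite -/(sS _) (eq_bigr sS (fun i _ => erefl)) sum_S -/(sS y); ring.
by rewrite big_split /= -!mulr_sumr sum_S.
Qed.


Lemma oS_ib x : oS x = ib (x \notin S).
Proof. by rewrite /oS /sS ibN. Qed.
Lemma sS_ib x : sS x = ib (x \in S). Proof. by []. Qed.

Lemma prod_sum (f g : T -> int) : (\sum_i f i) * (\sum_j g j) = \sum_i \sum_j f i * g j.
Proof. rewrite mulr_suml; apply: eq_bigr => i _; by rewrite mulr_sumr. Qed.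

Lemma sum_on2 : \sum_x oS x * n x ^+ 2 = 3840.
Proof.
rewrite -sum_SS_com.
transitivity (\sum_x \sum_y \sum_y' oS x * (sS y * E x y) * (sS y' * E x y')).
  apply: eq_bigr => x _; rewrite expr2 /n prod_sum mulr_sumr; apply: eq_bigr => y _.
  by rewrite mulr_sumr; apply: eq_bigr => y' _; ring.
rewrite exchange_big; apply: eq_bigr => y _ /=.
rewrite exchange_big; apply: eq_bigr => y' _ /=.
rewrite mulr_sumr; apply: eq_bigr => x _; rewrite (Esym x y) (Esym x y'); ring.
Qed.

Lemma n_out x : x \notin S -> n x = 8.
Proof.
move=> xS.
have H : \sum_x oS x * (n x - 8) ^+ 2 = 0.
  rewrite (eq_bigr (fun x => oS x * n x ^+ 2 - 16 * (oS x * n x) + 64 * oS x)); last by move=> z _; ring.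
  by rewrite big_split /= sumrB -!mulr_sumr sum_on2 sum_on sum_O.
have Hge : forall z, predT z -> 0 <= oS z * (n z - 8) ^+ 2.
  by move=> z _; rewrite oS_ib; apply: mulr_ge0; [exact: ib_ge0 | exact: sqr_ge0].
have := psumr_eq0P Hge H (isT : predT x).
by rewrite oS_ib xS /ib mul1r => /eqP; rewrite sqrf_eq0 subr_eq0 => /eqP.
Qed.


Definition t x z := \sum_y sS y * E x y * E z y.
Definition R x z := 12 * dl x z - 6 * E x z - 3 * t x z + 14.

Lemma tsym x z : t x z = t z x.
Proof. by apply: eq_bigr => y _; ring. Qed.
Lemma dlsym x z : dl x z = dl z x.
Proof. by rewrite /dl eq_sym. Qed.
Lemma Rsym x z : R x z = R z x.
Proof. by rewrite /R dlsym Esym tsym. Qed.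
Lemma txx x : t x x = n x.
Proof. by apply: eq_bigr => y _; rewrite -mulrA EE. Qed.

Lemma oS1 x : x \notin S -> oS x = 1.
Proof. by move=> xS; rewrite oS_ib xS. Qed.
Lemma sdl x y : x \notin S -> sS y * dl x y = 0.
Proof.
move=> xS; rewrite /sS /dl; case: (eqVneq x y) => [<-|ne]; last by rewrite /ib mulr0.
by rewrite (negbTE xS) /ib mul0r.
Qed.
Lemma st y y' : sS y * t y y' = 0.
Proof.
rewrite /t mulr_sumr big1 // => z _.
have -> : sS y * (sS z * E y z * E y' z) = (sS y * sS z * E y z) * E y' z by ring.
by rewrite cocE mul0r.
Qed.
Lemma sE y y' : sS y * sS y' * E y y' = 0.
Proof. exact: cocE. Qed.

Section W.
Variables (x w : T).
Hypothesis xS : x \notin S.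
Hypothesis wS : w \notin S.

Lemma L_dg (g : T -> int) : \sum_z oS z * dl x z * g z = g x.
Proof.
rewrite (eq_bigr (fun z => dl x z * (oS z * g z))); last by move=> z _; ring.
by rewrite sum_dl oS1 // mul1r.
Qed.
Lemma L_gd (g : T -> int) : \sum_z oS z * g z * dl z w = g w.
Proof.
rewrite (eq_bigr (fun z => dl z w * (oS z * g z))); last by move=> z _; ring.
by rewrite sum_dl' oS1 // mul1r.
Qed.

Lemma L_EE' a b : \sum_z oS z * E a z * E z b = 16 * dl a b - 6 * E a b + 14 - t a b.
Proof.
rewrite -sum_com /t -sumrB; apply: eq_bigr => z _; rewrite /oS (Esym z b); ring.
Qed.
Lemma L_E1 : \sum_z oS z * E x z = 22.
Proof. rewrite (eq_bigr (fun z => oS z * E x z)) ?sum_oE ?n_out //; by []. Qed.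
Lemma L_1E : \sum_z oS z * E z w = 22.
Proof. rewrite (eq_bigr (fun z => oS z * E w z)) ?sum_oE ?n_out // => z _; by rewrite Esym. Qed.

Lemma L_Et : \sum_z oS z * E x z * t z w = -6 * t x w + 112.
Proof.
transitivity (\sum_y sS y * E w y * (\sum_z oS z * E x z * E z y)).
  rewrite /t.
  transitivity (\sum_z \sum_y oS z * E x z * (sS y * E z y * E w y)).
    by apply: eq_bigr => z _; rewrite mulr_sumr.
  rewrite exchange_big; apply: eq_bigr => y _ /=; rewrite mulr_sumr.
  by apply: eq_bigr => z _; ring.
transitivity (\sum_y (-6 * (sS y * E x y * E w y) + 14 * (sS y * E w y))).
  apply: eq_bigr => y _; rewrite L_EE'.
  have h1 := sdl y xS; have h2 := st y x.
  rewrite [t x y]tsym.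
  have -> : sS y * E w y * (16 * dl x y - 6 * E x y + 14 - t y x) =
     16 * E w y * (sS y * dl x y) - E w y * (sS y * t y x) + (-6 * (sS y * E x y * E w y) + 14 * (sS y * E w y)) by ring.
  by rewrite h1 h2 !mulr0 subr0 add0r.
rewrite big_split /= -!mulr_sumr.
have -> : \sum_y sS y * E w y = n w by [].
by rewrite n_out.
Qed.

Lemma L_tt : \sum_z oS z * t x z * t z w = 16 * t x w + 896.
Proof.
transitivity (\sum_y \sum_y' (sS y * E x y) * (sS y' * E w y') * (\sum_z oS z * E y z * E z y')).
  rewrite /t.
  transitivity (\sum_z \sum_y \sum_y' oS z * (sS y * E x y * E z y) * (sS y' * E z y' * E w y')).
    by apply: eq_bigr => z _; rewrite -mulrA prod_sum mulr_sumr; apply: eq_bigr => y _; rewrite mulr_sumr; apply: eq_bigr => y' _; ring.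
  rewrite exchange_big; apply: eq_bigr => y _ /=.
  rewrite exchange_big; apply: eq_bigr => y' _ /=.
  rewrite mulr_sumr; apply: eq_bigr => z _; rewrite (Esym z y); ring.
transitivity (\sum_y \sum_y' (16 * (dl y y' * ((sS y * E x y) * (sS y' * E w y'))) + 14 * ((sS y * E x y) * (sS y' * E w y')))).
  apply: eq_bigr => y _; apply: eq_bigr => y' _; rewrite L_EE'.
  have h1 := sE y y'; have h2 := st y y'.
  have -> : sS y * E x y * (sS y' * E w y') * (16 * dl y y' - 6 * E y y' + 14 - t y y') =
    16 * (dl y y' * ((sS y * E x y) * (sS y' * E w y'))) + 14 * ((sS y * E x y) * (sS y' * E w y'))
    - 6 * E x y * E w y' * (sS y * sS y' * E y y') - E x y * sS y' * E w y' * (sS y * t y y') by ring.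
  by rewrite h1 h2 !mulr0 !subr0.
transitivity (\sum_y (16 * (sS y * E x y * E w y)) + 14 * (n x * n w)).
  rewrite /n prod_sum mulr_sumr -big_split /=; apply: eq_bigr => y _.
  rewrite big_split /= -mulr_sumr sum_dl mulr_sumr; congr (_ + _).
  have hy : sS y * sS y = sS y := ibK _.
  transitivity (16 * (sS y * sS y * E x y * E w y)); first ring.
  by rewrite hy.
by rewrite -mulr_sumr !n_out //.
Qed.

Lemma L_t1 : \sum_z oS z * t x z = 240.
Proof.
rewrite /t.
transitivity (\sum_y sS y * E x y * \sum_z oS z * E y z).
  transitivity (\sum_z \sum_y oS z * (sS y * E x y * E z y)).
    by apply: eq_bigr => z _; rewrite mulr_sumr.
  rewrite exchange_big; apply: eq_bigr => y _ /=; rewrite mulr_sumr; apply: eq_bigr => z _; rewrite (Esym z y); ring.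
transitivity (\sum_y (30 * (sS y * E x y))).
  apply: eq_bigr => y _; rewrite sum_oE.
  have -> : sS y * E x y * (30 - n y) = 30 * (sS y * E x y) - E x y * (sS y * n y) by ring.
  by rewrite nS mulr0 subr0.
by rewrite -mulr_sumr -/(n x) n_out.
Qed.

End W.

Lemma L_tE x w : x \notin S -> w \notin S -> \sum_z oS z * t x z * E z w = -6 * t x w + 112.
Proof.
move=> xS wS; rewrite [t x w]tsym -(L_Et wS xS); apply: eq_bigr => z _; rewrite tsym Esym; ring.
Qed.
Lemma L_1t w : w \notin S -> \sum_z oS z * t z w = 240.
Proof. move=> wS; rewrite -(L_t1 wS); apply: eq_bigr => z _; by rewrite tsym. Qed.


Lemma RR x w : x \notin S -> w \notin S ->
  \sum_z oS z * R x z * R z w = 60 * R x w.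
Proof.
move=> xS wS.
transitivity (\sum_z (144*(oS z*dl x z*dl z w) + (-72)*(oS z*dl x z*E z w) + (-36)*(oS z*dl x z*t z w)
  + 168*(oS z*dl x z*1) + (-72)*(oS z*E x z*dl z w) + 36*(oS z*E x z*E z w) + 18*(oS z*E x z*t z w)
  + (-84)*(oS z*E x z) + (-36)*(oS z*t x z*dl z w) + 18*(oS z*t x z*E z w) + 9*(oS z*t x z*t z w)
  + (-42)*(oS z*t x z) + 168*(oS z*1*dl z w) + (-84)*(oS z*E z w) + (-42)*(oS z*t z w) + 196*oS z)).
  by apply: eq_bigr => z _; rewrite /R; ring.
rewrite !big_split /= -!mulr_sumr.
rewrite (L_dg xS (fun z => dl z w)) (L_dg xS (fun z => E z w)) (L_dg xS (fun z => t z w)) (L_dg xS (fun _ => 1)).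
rewrite (L_gd wS (fun z => E x z)) (L_gd wS (fun z => t x z)) (L_gd wS (fun _ => 1)).
rewrite L_EE' (L_Et xS wS) (L_E1 xS) (L_tE xS wS) (L_tt xS wS) (L_t1 xS) (L_1E wS) (L_1t wS) sum_O.
rewrite /R; ring.
Qed.


Lemma Rxx x : x \notin S -> R x x = 2.
Proof. by move=> xS; rewrite /R Exx txx n_out // /dl eqxx /ib. Qed.

Lemma Rsq x w (c : int) : x \notin S -> w \notin S ->
  \sum_z oS z * (R x z + c * R w z) ^+ 2 = 60 * (R x x + 2 * c * R x w + c ^+ 2 * R w w).
Proof.
move=> xS wS.
transitivity (\sum_z (oS z * R x z * R z x + (2 * c) * (oS z * R x z * R z w) + c ^+ 2 * (oS z * R w z * R z w))).
  by apply: eq_bigr => z _; rewrite (Rsym z x) (Rsym z w); ring.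
by rewrite !big_split /= -!mulr_sumr !RR //; ring.
Qed.

Lemma Rvals x w : x \notin S -> w \notin S -> R x w = 2 \/ R x w = -1.
Proof.
move=> xS wS.
have ge0 c : 0 <= \sum_z oS z * (R x z + c * R w z) ^+ 2.
  apply: sumr_ge0 => z _; rewrite oS_ib; apply: mulr_ge0; [exact: ib_ge0 | exact: sqr_ge0].
have h1 := ge0 1; have h2 := ge0 (-1).
rewrite Rsq // !Rxx // in h1.
rewrite Rsq // !Rxx // in h2.
have h3 : R x w = 3 * (4 * dl x w - 2 * E x w - t x w + 4) + 2 by rewrite /R; ring.
move: h1 h2; rewrite h3; set k := (4 * dl x w - 2 * E x w - t x w + 4).
rewrite !expr2 => h1 h2.
have : k = 0 \/ k = -1 by lia.
by case=> ->; [left | right].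
Qed.

Lemma Rrow x w z : x \notin S -> w \notin S -> z \notin S -> R x w = 2 -> R x z = R w z.
Proof.
move=> xS wS zS h.
have H : \sum_z oS z * (R x z + (-1) * R w z) ^+ 2 = 0.
  by rewrite Rsq // !Rxx // h; rewrite expr2; ring.
have Hge : forall z, predT z -> 0 <= oS z * (R x z + (-1) * R w z) ^+ 2.
  by move=> y _; rewrite oS_ib; apply: mulr_ge0; [exact: ib_ge0 | exact: sqr_ge0].
have := psumr_eq0P Hge H (isT : predT z).
rewrite oS1 // mul1r => /eqP; rewrite sqrf_eq0 => /eqP h2.
by apply/eqP; rewrite -subr_eq0; apply/eqP; rewrite -h2; ring.
Qed.


Section Class.
Variable x0 : T.
Hypothesis x0S : x0 \notin S.

Definition inC z := (z \notin S) && (R x0 z == 2).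
Definition Cc z := ib (inC z).

Lemma inC_out z : inC z -> z \notin S.
Proof. by case/andP. Qed.

Lemma oR z : oS z * R x0 z = 3 * Cc z - oS z.
Proof.
rewrite /Cc /inC oS_ib; case zS: (z \in S) => /=; first by rewrite /ib !mul0r subr0.
rewrite /ib mul1r; case: (Rvals x0S (negbT zS)) => ->; by [].
Qed.

Lemma sum_C : \sum_z Cc z = 20.
Proof.
have H : \sum_z oS z * R x0 z = 0.
  transitivity (\sum_z (12 * (oS z * dl x0 z * 1) + (-6) * (oS z * E x0 z) + (-3) * (oS z * t x0 z) + 14 * oS z)).
    by apply: eq_bigr => z _; rewrite /R; ring.
  rewrite !big_split /= -!mulr_sumr (L_dg x0S (fun _ => 1)) (L_E1 x0S) (L_t1 x0S) sum_O.
  by [].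
move: H; rewrite (eq_bigr (fun z => 3 * Cc z - oS z)); last by move=> z _; rewrite oR.
rewrite sumrB -mulr_sumr sum_O => /eqP; rewrite subr_eq0 => /eqP h.
have h2 : 3 * (\sum_z Cc z) = 60 := h. lia.
Qed.

Lemma R_CC z w : inC z -> inC w -> R z w = 2.
Proof.
case/andP=> zS /eqP hz; case/andP=> wS /eqP hw.
by rewrite -(Rrow x0S zS wS hz).
Qed.

Lemma R_C z w : inC z -> w \notin S -> R z w = 3 * Cc w - 1.
Proof.
case/andP=> zS /eqP hz wS.
rewrite -(Rrow x0S zS wS hz).
by have := oR w; rewrite oS1 // mul1r => ->.
Qed.

Lemma degC x : inC x -> \sum_z Cc z * E x z = 2.
Proof.
move=> xC; have xS := inC_out xC.
have H1 : \sum_z oS z * E x z * R x z = -16.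
  transitivity (\sum_z (12 * (oS z * dl x z * E x z) + (-6) * (oS z * E x z) + (-3) * (oS z * E x z * t z x) + 14 * (oS z * E x z))).
    apply: eq_bigr => z _; rewrite /R (tsym x z).
    have hE : E x z * E x z = E x z := EE x z.
    transitivity (12 * (oS z * dl x z * E x z) + (-6) * (oS z * (E x z * E x z)) + (-3) * (oS z * E x z * t z x) + 14 * (oS z * E x z)); first ring.
    by rewrite hE.
  rewrite !big_split /= -!mulr_sumr (L_dg xS (fun z => E x z)) Exx (L_E1 xS) (L_Et xS xS) txx n_out //.
have H2 : \sum_z oS z * E x z * R x z = 3 * (\sum_z Cc z * E x z) - 22.
  rewrite -(L_E1 xS) mulr_sumr -sumrB; apply: eq_bigr => z _.
  case zS: (z \in S).
    rewrite /Cc /inC zS /= oS_ib zS /ib; ring.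
  rewrite (R_C xC (negbT zS)) oS1 ?zS //; ring.
move: H1; rewrite H2 => h; lia.
Qed.

Definition sg x p := 2 * E x p - 1.
Definition g x z := \sum_p sS p * sg x p * sg z p.

Lemma sg2 x p : sg x p * sg x p = 1.
Proof. by rewrite /sg /E; case: (e x p). Qed.

Lemma g_form x z : g x z = 4 * t x z - 2 * n x - 2 * n z + 16.
Proof.
rewrite /g.
transitivity (\sum_p (4 * (sS p * E x p * E z p) + (-2) * (sS p * E x p) + (-2) * (sS p * E z p) + sS p)).
  by apply: eq_bigr => p _; rewrite /sg; ring.
by rewrite !big_split /= -!mulr_sumr sum_S; rewrite /n /t; ring.
Qed.

Lemma gC x z : inC x -> inC z -> g x z = 16 * dl x z - 8 * E x z.
Proof.
move=> xC zC; have h := R_CC xC zC; rewrite /R in h.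
rewrite g_form !n_out ?inC_out //; lia.
Qed.

Lemma sg_bal x : x \notin S -> \sum_p sS p * sg x p = 0.
Proof.
move=> xS; transitivity (\sum_p (2 * (sS p * E x p) - sS p)).
  by apply: eq_bigr => p _; rewrite /sg; ring.
by rewrite sumrB -mulr_sumr -/(n x) n_out // sum_S.
Qed.

Lemma no_tri x z w : inC x -> inC z -> inC w -> E x z = 1 -> E z w = 1 -> E x w = 1 -> False.
Proof.
move=> xC zC wC hxz hzw hxw.
have dxz : dl x z = 0 by rewrite /dl; case: eqP => // exz; by rewrite exz Exx in hxz.
have dzw : dl z w = 0 by rewrite /dl; case: eqP => // exz; by rewrite exz Exx in hzw.
have dxw : dl x w = 0 by rewrite /dl; case: eqP => // exz; by rewrite exz Exx in hxw.
have H : \sum_p sS p * (sg x p + sg z p + sg w p) ^+ 2 = 0.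
  transitivity (g x x + g z z + g w w + 2 * (g x z + g z w + g x w)).
    rewrite /g !mulrDr !mulr_sumr -!big_split /=; apply: eq_bigr => p _; ring.
  rewrite !gC // hxz hzw hxw dxz dzw dxw !Exx /dl !eqxx /ib; by [].
have : \sum_p sS p <= \sum_p sS p * (sg x p + sg z p + sg w p) ^+ 2.
  apply: ler_sum => p _.
  have h1 : 1 <= (sg x p + sg z p + sg w p) ^+ 2.
    by rewrite /sg /E; case: (e x p); case: (e z p); case: (e w p).
  rewrite -[X in X <= _]mulr1; apply: ler_wpM2l => //; exact: ib_ge0.
by rewrite H sum_S.
Qed.

Lemma BF (a b : T -> int) :
  \sum_p sS p * (\sum_x a x * sg x p) * (\sum_x b x * sg x p) = \sum_x \sum_x' a x * b x' * g x x'.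
Proof.
transitivity (\sum_p \sum_x \sum_x' sS p * (a x * sg x p) * (b x' * sg x' p)).
  apply: eq_bigr => p _; rewrite -mulrA prod_sum mulr_sumr; apply: eq_bigr => x _.
  by rewrite mulr_sumr; apply: eq_bigr => x' _; ring.
rewrite exchange_big; apply: eq_bigr => x _ /=.
rewrite exchange_big; apply: eq_bigr => x' _ /=.
rewrite /g mulr_sumr; apply: eq_bigr => p _; ring.
Qed.

Definition W x z := 4 * dl x z + E x z.
Lemma gsym x z : g x z = g z x.
Proof. by apply: eq_bigr => p _; ring. Qed.
Lemma Wsym x z : W x z = W z x.
Proof. by rewrite /W dlsym Esym. Qed.

Definition k p q := \sum_x \sum_z Cc x * Cc z * W x z * sg x p * sg z q.
Definition U x q := \sum_z Cc z * W x z * sg z q.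
Definition cc a b := \sum_y Cc y * E a y * E y b.
Definition F a b := \sum_y Cc y * g a y * W y b.

Lemma kU p q : k p q = \sum_x (Cc x * U x q) * sg x p.
Proof.
apply: eq_bigr => x _; rewrite /U mulr_sumr mulr_suml; apply: eq_bigr => z _; ring.
Qed.

Lemma k2 : \sum_p \sum_q sS p * sS q * k p q ^+ 2 = \sum_a \sum_b Cc a * Cc b * F a b * F b a.
Proof.
transitivity (\sum_q sS q * \sum_p sS p * (\sum_x (Cc x * U x q) * sg x p) * (\sum_x (Cc x * U x q) * sg x p)).
  rewrite exchange_big; apply: eq_bigr => q _ /=; rewrite mulr_sumr; apply: eq_bigr => p _.
  by rewrite kU expr2; ring.
transitivity (\sum_q \sum_x \sum_x' sS q * (Cc x * U x q) * (Cc x' * U x' q) * g x x').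
  apply: eq_bigr => q _; rewrite BF mulr_sumr; apply: eq_bigr => x _.
  by rewrite mulr_sumr; apply: eq_bigr => x' _; ring.
transitivity (\sum_x \sum_x' Cc x * Cc x' * g x x' * (\sum_q sS q * (\sum_z (Cc z * W x z) * sg z q) * (\sum_z (Cc z * W x' z) * sg z q))).
  rewrite exchange_big; apply: eq_bigr => x _ /=.
  rewrite exchange_big; apply: eq_bigr => x' _ /=.
  rewrite mulr_sumr; apply: eq_bigr => q _.
  have hU y : U y q = \sum_z (Cc z * W y z) * sg z q.
    by apply: eq_bigr => z _; ring.
  rewrite !hU; ring.
transitivity (\sum_x \sum_x' \sum_z \sum_z' Cc x * Cc x' * g x x' * ((Cc z * W x z) * (Cc z' * W x' z') * g z z')).
  apply: eq_bigr => x _; apply: eq_bigr => x' _.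
  rewrite BF mulr_sumr; apply: eq_bigr => z _; by rewrite mulr_sumr.
rewrite exchange_big; apply: eq_bigr => x' _ /=.
rewrite exchange_big; apply: eq_bigr => z _ /=.
rewrite /F -mulrA prod_sum mulr_sumr; apply: eq_bigr => x _.
rewrite mulr_sumr; apply: eq_bigr => z' _.
rewrite (gsym x' x) (Wsym z' x'); ring.
Qed.

Lemma Cc_ib z : Cc z = ib (inC z). Proof. by []. Qed.

Lemma Cg a y : inC a -> Cc y * g a y = Cc y * (16 * dl a y - 8 * E a y).
Proof.
move=> aC; rewrite /Cc; case yC: (inC y); last by rewrite /ib !mul0r.
by rewrite gC.
Qed.

Lemma F_form a b : inC a -> inC b -> F a b = 64 * dl a b - 16 * E a b - 8 * cc a b.
Proof.
move=> aC bC.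
transitivity (\sum_y (64 * (dl a y * (Cc y * dl y b)) + 16 * (dl a y * (Cc y * E y b))
   + (-32) * (dl y b * (Cc y * E a y)) + (-8) * (Cc y * E a y * E y b))).
  apply: eq_bigr => y _; rewrite /W Cg //; ring.
rewrite !big_split /= -!mulr_sumr !sum_dl !sum_dl' /cc.
have -> : Cc a = 1 by rewrite /Cc aC.
have -> : Cc b = 1 by rewrite /Cc bC.
ring.
Qed.

Lemma ccsym a b : cc a b = cc b a.
Proof. by apply: eq_bigr => y _; rewrite (Esym a y) (Esym y b); ring. Qed.

Lemma cc_ge0 a b : 0 <= cc a b.
Proof. apply: sumr_ge0 => y _; rewrite /Cc /E; apply: mulr_ge0; [apply: mulr_ge0|]; exact: ib_ge0. Qed.

Lemma cc_le2 a b : inC a -> cc a b <= 2.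
Proof.
move=> aC; rewrite -(degC aC); apply: ler_sum => y _.
rewrite /Cc /E; case: (inC y); case: (e a y); case: (e y b); by [].
Qed.

Lemma cc_adj a b : inC a -> inC b -> E a b = 1 -> cc a b = 0.
Proof.
move=> aC bC hab; apply: big1 => y _.
rewrite /Cc; case yC: (inC y); last by rewrite /ib !mul0r.
case hay: (e a y); last by rewrite /E hay /ib mulr0 mul0r.
case hyb: (e y b); last by rewrite /E hyb /ib mulr0.
exfalso; apply: (no_tri aC yC bC) => //; by rewrite /E ?hay ?hyb.
Qed.

Lemma sum_Ccc a : inC a -> \sum_b Cc b * cc a b = 4.
Proof.
move=> aC.
transitivity (\sum_y Cc y * E a y * \sum_b Cc b * E y b).
  rewrite /cc.
  transitivity (\sum_b \sum_y Cc b * (Cc y * E a y * E y b)).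
    by apply: eq_bigr => b _; rewrite mulr_sumr.
  rewrite exchange_big; apply: eq_bigr => y _ /=; rewrite mulr_sumr; apply: eq_bigr => b _; ring.
transitivity (\sum_y 2 * (Cc y * E a y)).
  apply: eq_bigr => y _; rewrite /Cc; case yC: (inC y); last by rewrite /ib !mul0r mulr0.
  rewrite (degC yC); ring.
by rewrite -mulr_sumr degC.
Qed.

Lemma rowF a : inC a -> \sum_b Cc b * (64 * dl a b - 16 * E a b - 8 * cc a b) ^+ 2 <= 3072.
Proof.
move=> aC.
set v := fun b => 2 * E a b + cc a b.
have hv b : inC b -> v b * v b <= 2 * v b.
  move=> bC; rewrite /v.
  have h0 := cc_ge0 a b; have h2 := cc_le2 b aC.
  case hab: (e a b).
    have h := cc_adj aC bC (_ : E a b = 1); rewrite h ?/E ?hab //.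
  have -> : E a b = 0 by rewrite /E hab.
  have : cc a b = 0 \/ cc a b = 1 \/ cc a b = 2 by lia.
  by case=> [->|[->|->]].
have hdv : v a = 2.
  rewrite /v Exx mulr0 add0r.
  rewrite -(degC aC); apply: eq_bigr => y _; rewrite (Esym y a) -mulrA EE; by [].
have H1 : \sum_b Cc b * (64 * dl a b - 16 * E a b - 8 * cc a b) ^+ 2
   = 4096 * (\sum_b dl a b * Cc b) - 1024 * (\sum_b dl a b * (Cc b * v b)) + 64 * (\sum_b Cc b * (v b * v b)).
  rewrite !mulr_sumr -sumrB -big_split /=; apply: eq_bigr => b _.
  have hd : dl a b * dl a b = dl a b by apply: ibK.
  transitivity (Cc b * (64 * dl a b - 8 * v b) ^+ 2); first by rewrite /v; congr (_ * _); congr (_ ^+ 2); ring.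
  rewrite expr2.
  transitivity (4096 * (dl a b * dl a b * Cc b) - 1024 * (dl a b * (Cc b * v b)) + 64 * (Cc b * (v b * v b))); first ring.
  by rewrite hd.
have hCa : Cc a = 1 by rewrite /Cc aC.
rewrite H1 !sum_dl hdv hCa.
have H2 : \sum_b Cc b * (v b * v b) <= \sum_b Cc b * (2 * v b).
  apply: ler_sum => b _; rewrite /Cc; case bC: (inC b); last by rewrite /ib !mul0r.
  rewrite /ib !mul1r; exact: hv.
have H3 : \sum_b Cc b * (2 * v b) = 16.
  transitivity (\sum_b (4 * (Cc b * E a b) + 2 * (Cc b * cc a b))).
    by apply: eq_bigr => b _; rewrite /v; ring.
  rewrite big_split /= -!mulr_sumr sum_Ccc //.
  by rewrite degC.
move: H2; rewrite H3 => H2.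
lia.
Qed.

Lemma k2_bound : \sum_p \sum_q sS p * sS q * k p q ^+ 2 <= 3072 * 20.
Proof.
rewrite k2.
have Hs : \sum_a 3072 * Cc a = 3072 * 20 by rewrite -mulr_sumr sum_C.
suff H : \sum_a \sum_b Cc a * Cc b * F a b * F b a <= \sum_a 3072 * Cc a.
  by rewrite -Hs.
apply: ler_sum => a _.
rewrite /Cc; case aC: (inC a); last first.
  by rewrite /ib mulr0 big1 // => b _; rewrite !mul0r.
rewrite /ib mulr1.
rewrite (eq_bigr (fun b => Cc b * (64 * dl a b - 16 * E a b - 8 * cc a b) ^+ 2)); first exact: rowF.
move=> b _; rewrite /Cc; case bC: (inC b); last by rewrite /ib !mulr0 !mul0r.
rewrite !F_form // (dlsym b a) (Esym b a) (ccsym b a) /ib expr2; ring.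
Qed.

Lemma CcK x : Cc x * Cc x = Cc x. Proof. exact: ibK. Qed.

Lemma sum_Cdeg : \sum_x Cc x * \sum_z Cc z * E x z = 40.
Proof.
rewrite (eq_bigr (fun x => 2 * Cc x)); first by rewrite -mulr_sumr sum_C.
move=> x _; rewrite /Cc; case xC: (inC x); last by rewrite /ib !mul0r mulr0.
by rewrite degC // /ib; ring.
Qed.

Lemma sum_kpp : \sum_p sS p * k p p = 960.
Proof.
transitivity (\sum_x \sum_z Cc x * Cc z * W x z * g x z).
  rewrite /k /g.
  transitivity (\sum_p \sum_x \sum_z sS p * (Cc x * Cc z * W x z * sg x p * sg z p)).
    by apply: eq_bigr => p _; rewrite mulr_sumr; apply: eq_bigr => x _; rewrite mulr_sumr.
  rewrite exchange_big; apply: eq_bigr => x _ /=.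
  rewrite exchange_big; apply: eq_bigr => z _ /=.
  rewrite mulr_sumr; apply: eq_bigr => p _; ring.
transitivity (\sum_x (64 * Cc x + (-8) * (Cc x * \sum_z Cc z * E x z))).
  apply: eq_bigr => x _.
  rewrite /Cc; case xC: (inC x); last by rewrite /ib big1 ?mulr0 ?mul0r ?addr0 // => z _; rewrite !mul0r.
  rewrite (eq_bigr (fun z => 64 * (dl x z * Cc z) + (-8) * (Cc z * E x z))); last first.
    move=> z _; rewrite /Cc; case zC: (inC z); last by rewrite /ib !mulr0 !mul0r mulr0 addr0.
    rewrite gC // /W /ib /dl; case: (eqVneq x z) => [<-|ne]; first by rewrite Exx.
    by rewrite /E; case: (e x z).
  by rewrite big_split /= -!mulr_sumr sum_dl /Cc xC /ib; ring.
by rewrite big_split /= -!mulr_sumr sum_C sum_Cdeg.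
Qed.

Lemma sum_kq p : \sum_q sS q * k p q = 0.
Proof.
rewrite /k.
transitivity (\sum_x \sum_z Cc x * W x z * sg x p * (Cc z * \sum_q sS q * sg z q)).
  transitivity (\sum_q \sum_x \sum_z sS q * (Cc x * Cc z * W x z * sg x p * sg z q)).
    by apply: eq_bigr => q _; rewrite mulr_sumr; apply: eq_bigr => x _; rewrite mulr_sumr.
  rewrite exchange_big; apply: eq_bigr => x _ /=.
  rewrite exchange_big; apply: eq_bigr => z _ /=.
  rewrite !mulr_sumr; apply: eq_bigr => q _; ring.
apply: big1 => x _; apply: big1 => z _.
rewrite /Cc; case zC: (inC z); last by rewrite /ib /= mul0r mulr0.
by rewrite (sg_bal (inC_out zC)) !mulr0.
Qed.

Lemma Dsum : \sum_p \sum_q sS p * sS q * (64 * dl p q - 4 - k p q) ^+ 2 <= 0.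
Proof.
have e1 : \sum_p \sum_q sS p * sS q * (64 * dl p q - 4 - k p q) ^+ 2 =
  \sum_p (3840 * sS p + (-128) * (sS p * k p p) + 8 * (sS p * \sum_q sS q * k p q)) + \sum_p \sum_q sS p * sS q * k p q ^+ 2.
  rewrite -big_split /=; apply: eq_bigr => p _.
  rewrite (eq_bigr (fun q => 3584 * (dl p q * (sS p * sS q)) + 16 * (sS p * sS q) + (-128) * (dl p q * (sS p * sS q * k p q))
     + 8 * (sS p * (sS q * k p q)) + sS p * sS q * k p q ^+ 2)); last first.
    move=> q _; have hd : dl p q * dl p q = dl p q := ibK _.
    rewrite !expr2.
    transitivity (3584 * (dl p q * (sS p * sS q)) + 16 * (sS p * sS q) + (-128) * (dl p q * (sS p * sS q * k p q))
     + 8 * (sS p * (sS q * k p q)) + sS p * sS q * (k p q * k p q) + 4096 * (sS p * sS q) * (dl p q * dl p q - dl p q)); first ring.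
    by rewrite hd subrr mulr0 addr0.
  rewrite !big_split /= -!mulr_sumr !sum_dl sum_S.
  have hp : sS p * sS p = sS p := ibK _.
  rewrite hp; ring.
rewrite e1 !big_split /= -!mulr_sumr sum_S sum_kpp.
rewrite big1; last by move=> p _; rewrite sum_kq mulr0.
have := k2_bound; set X := \sum_p \sum_q sS p * sS q * k p q ^+ 2 => HX; lia.
Qed.

Lemma kpp60 p : p \in S -> k p p = 60.
Proof.
move=> pS.
have hge : forall p, predT p -> 0 <= \sum_q sS p * sS q * (64 * dl p q - 4 - k p q) ^+ 2.
  move=> p' _; apply: sumr_ge0 => q _; apply: mulr_ge0; [apply: mulr_ge0; exact: ib_ge0 | exact: sqr_ge0].
have H0 : \sum_p \sum_q sS p * sS q * (64 * dl p q - 4 - k p q) ^+ 2 = 0.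
  have h1 := Dsum.
  have h2 : 0 <= \sum_p \sum_q sS p * sS q * (64 * dl p q - 4 - k p q) ^+ 2.
    by apply: sumr_ge0 => p' _; exact: hge.
  move: h1 h2; set X := \sum_p \sum_q _; lia.
have H1 := psumr_eq0P hge H0 (isT : predT p).
have hge2 : forall q, predT q -> 0 <= sS p * sS q * (64 * dl p q - 4 - k p q) ^+ 2.
  by move=> q _; apply: mulr_ge0; [apply: mulr_ge0; exact: ib_ge0 | exact: sqr_ge0].
have := psumr_eq0P hge2 H1 (isT : predT p).
rewrite /sS pS /dl eqxx /ib !mul1r => /eqP; rewrite sqrf_eq0 => /eqP h.
lia.
Qed.

Definition nu x p := 1 - E x p.

Lemma parity_core p : p \in S ->
  \sum_x \sum_z Cc x * Cc z * E x z * nu x p * nu z p = 2 * (\sum_x Cc x * nu x p) - 15.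
Proof.
move=> pS; have h60 := kpp60 pS.
have hk : k p p = 80 + \sum_x \sum_z Cc x * Cc z * E x z * sg x p * sg z p.
  rewrite /k (eq_bigr (fun x => 4 * Cc x + \sum_z Cc x * Cc z * E x z * sg x p * sg z p)).
    by rewrite big_split /= -mulr_sumr sum_C.
  move=> x _.
  rewrite (eq_bigr (fun z => 4 * (dl x z * (Cc x * Cc z * sg x p * sg z p)) + Cc x * Cc z * E x z * sg x p * sg z p)).
    rewrite big_split /= -mulr_sumr sum_dl.
    have h1 := sg2 x p; have h2 := CcK x.
    transitivity (4 * (Cc x * Cc x) * (sg x p * sg x p) + \sum_z Cc x * Cc z * E x z * sg x p * sg z p); first ring.
    by rewrite h1 h2 mulr1.
  by move=> z _; rewrite /W; ring.
have hA : \sum_x \sum_z Cc x * Cc z * E x z * nu x p = 2 * (\sum_x Cc x * nu x p).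
  rewrite mulr_sumr; apply: eq_bigr => x _.
  rewrite (eq_bigr (fun z => Cc x * nu x p * (Cc z * E x z))); last by move=> z _; ring.
  rewrite -mulr_sumr; rewrite /Cc; case xC: (inC x); last by rewrite /ib /= !mul0r mulr0.
  by rewrite -/(Cc _) (eq_bigr (fun z => Cc z * E x z)) // degC //; ring.
have hB : \sum_x \sum_z Cc x * Cc z * E x z * nu z p = 2 * (\sum_x Cc x * nu x p).
  rewrite exchange_big /=; rewrite -hA; apply: eq_bigr => x _; apply: eq_bigr => z _.
  rewrite (Esym z x); ring.
have hD : \sum_x \sum_z Cc x * Cc z * E x z * sg x p * sg z p =
   \sum_x \sum_z Cc x * Cc z * E x z - 2 * (\sum_x \sum_z Cc x * Cc z * E x z * nu x p)
   - 2 * (\sum_x \sum_z Cc x * Cc z * E x z * nu z p) + 4 * (\sum_x \sum_z Cc x * Cc z * E x z * nu x p * nu z p).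
  rewrite !mulr_sumr -!sumrB -!big_split /=; apply: eq_bigr => x _.
  rewrite !mulr_sumr -!sumrB -!big_split /=; apply: eq_bigr => z _.
  rewrite /sg /nu; ring.
have h40 : \sum_x \sum_z Cc x * Cc z * E x z = 40.
  rewrite -sum_Cdeg; apply: eq_bigr => x _; rewrite mulr_sumr; apply: eq_bigr => z _; ring.
move: h60; rewrite hk hD hA hB h40.
set N := \sum_x \sum_z _. set m := \sum_x _.
move=> h; lia.
Qed.

Lemma contra p : p \in S -> False.
Proof.
move=> pS; have h := parity_core pS.
have fs : forall x z, Cc x * Cc z * E x z * nu x p * nu z p = Cc z * Cc x * E z x * nu z p * nu x p.
  by move=> x z; rewrite (Esym x z); ring.
have fd : forall x, Cc x * Cc x * E x x * nu x p * nu x p = 0.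
  by move=> x; rewrite Exx; ring.
have [M hM] := @sum_sym_even T (fun x z => Cc x * Cc z * E x z * nu x p * nu z p) fs fd.
move: h; rewrite hM; set m := \sum_x _; lia.
Qed.

End Class.

End Main.

Local Close Scope ring_scope.

Theorem mainTheorem17 (T : finType) (e : rel T) :
  srg e 76 30 8 14 ->
  ~ (exists S : {set T}, #|S| = 16 /\ coclique e S).
Proof.
case=> [[esym eirr] cardT deg lam mu] [S [cS cocl]].
have [x0 x0S] : exists x0, x0 \notin S.
  case: (pickP (fun x => x \notin S)) => [x0 h|h]; first by exists x0.
  have : [set: T] \subset S by apply/subsetP => x _; move: (h x) => /= /negbFE.
  by move/subset_leq_card; rewrite cardsT cS cardT.
have [p pS] : exists p, p \in S.
  case: (set_0Vmem S) => [S0|[p pS]]; last by exists p.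
  by move: cS; rewrite S0 cards0.
by apply: (@contra T e S) pS; eauto.
Qed.
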